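(* Consider a quadrotor with unknown mass $m>0$, and the position and attitude tracking errors $e_p(t)\in\mathbb{R}^3$, $e_q(t)\in\mathbb{R}^3$, with $\xi_p=[e_p^T\ \dot e_p^T]^T$, $\xi_q=[e_q^T\ \dot e_q^T]^T$ and sliding variables $$s_p=\dot e_p+\Phi_p e_p,\qquad s_q=\dot e_q+\Phi_q e_q,$$ where $\Phi_p,\Phi_q$ are positive definite gain matrices. Suppose the sliding variables obey $$m\dot s_p=\tau_p+\varphi_p-m g_p,\qquad J(t)\dot s_q=\tau_q-C_q(t)s_q+\varphi_q,$$ where $g_p=[0\ 0\ g]^T$ ($g>0$ the gravitational acceleration), $J(t)\in\mathbb{R}^{3\times 3}$ is a continuously differentiable symmetric matrix with $\underline{j}I\le J(t)\le \overline{j}I$ for some unknown $0<\underline j\le\overline j$, $C_q(t)\in\mathbb{R}^{3\times3}$ satisfies $r^T(\dot J-2C_q)r=0$ for all $r\in\mathbb{R}^3$, and the (unknown) lumped uncertainties satisfy, for all $t$, $$\|\varphi_p\|\le K_{p0}^*+K_{p1}^*\|\xi_p\|,\qquad \|\varphi_q\|\le K_{q0}^*+K_{q1}^*\|\xi_q\|+K_{q2}^*\|\xi_q\|^2$$ for unknown finite constants $K_{pi}^*,K_{qi}^*\ge 0$. Apply the control laws $$\tau_p=-\Lambda_p s_p-\rho_p\,\mathrm{sgn}(s_p)+\hat m\,g_p,\qquad \rho_p=\hat K_{p0}+\hat K_{p1}\|\xi_p\|,$$ $$\tau_q=-\Lambda_q s_q-\rho_q\,\mathrm{sgn}(s_q),\qquad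 \rho_q=\hat K_{q0}+\hat K_{q1}\|\xi_q\|+\hat K_{q2}\|\xi_q\|^2,$$ with positive definite $\Lambda_p,\Lambda_q$, $\mathrm{sgn}(x)=x/\|x\|$, and the adaptive laws $$\dot{\hat K}_{pi}=\|s_p\|\|\xi_p\|^i-\alpha_{pi}\hat K_{pi},\ \hat K_{pi}(0)>0\ (i=0,1),\qquad \dot{\hat m}=-s_p^Tg_p-\alpha_m\hat m,\ \hat m(0)>0,$$ $$\dot{\hat K}_{qi}=\|s_q\|\|\xi_q\|^i-\alpha_{qi}\hat K_{qi},\ \hat K_{qi}(0)>0\ (i=0,1,2),$$ with design scalars $\alpha_{pi},\alpha_m,\alpha_{qi}>0$. Then the closed-loop trajectories are uniformly ultimately bounded: defining $$V=\tfrac12 s_p^Tms_p+\tfrac12\sum_{i=0}^{1}(\hat K_{pi}-K_{pi}^* )^2+\tfrac12(\hat m-m)^2+\tfrac12 s_q^TJs_q+\tfrac12\sum_{i=0}^{2}(\hat K_{qi}-K_{qi}^* )^2,$$ there exists a constant $\bar{\mathcal B}\ge0$, depending only on $m,\overline j$, the constants $K_{pi}^*,K_{qi}^*$ and the design parameters $\Lambda_p,\Lambda_q,\alpha_{pi},\alpha_m,\alpha_{qi}$, such that $V(t)\le\max\{V(0),\bar{\mathcal B}\}$ for all $t\ge0$.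
   Context: This abstracts the outer (position) and inner (attitude) loops of a quadrotor controller: $p=[x\ y\ z]^T$ and $q=[\phi\ \theta\ \psi]^T$ are position and roll/pitch/yaw; $e_p=p-p_d$ for a bounded smooth desired trajectory $p_d$; $e_q$ is the attitude error (obtained from the vee map of $R_d^TR-R^TR_d$), $J$ the inertia matrix and $C_q$ the Coriolis matrix of the attitude dynamics, $\varphi_p,\varphi_q$ lump disturbances and unknown dynamics. $\lambda_{\min}(\cdot)$ denotes minimum eigenvalue. Uniformly ultimately bounded means: there exist $b>0$, $c>0$ such that for every $0<a<c$ there is $T>0$ with $\|x(t_0)\|\le a\Rightarrow\|x(t)\|\le b$ for all $t\ge t_0+T$. *)

(* Defs.v *)
From HB Require Import structures.
From mathcomp Require Import all_boot all_order all_algebra.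
From mathcomp Require Import all_classical all_reals all_analysis.
Set Implicit Arguments. Unset Strict Implicit. Unset Printing Implicit Defensive.
Import Order.TTheory GRing.Theory Num.Theory.
Import numFieldNormedType.Exports.
Local Open Scope ring_scope.

(* Euclidean norm of a column vector (the library's matrix norm is the max-norm). *)
Definition enorm {R : realType} {n : nat} (x : 'cV[R]_n) : R :=
  Num.sqrt (\sum_(i < n) x i 0 ^+ 2).

(* sgn(x) = x / ||x||  (with the MathComp convention 0^-1 = 0, sgn 0 = 0). *)
Definition sgnv {R : realType} {n : nat} (x : 'cV[R]_n) : 'cV[R]_n :=
  (enorm x)^-1 *: x.

Definition gvec {R : realType} (g : R) : 'cV[R]_3 :=
  \col_(i < 3) (if i == ord_max then g else 0).

Definition posdef {R : realType} (A : 'M[R]_3) : Prop :=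
  A^T = A /\ forall x : 'cV[R]_3, x != 0 -> 0 < (x^T *m A *m x) 0 0.

Definition slide {R : realType} (Phi : 'M[R]_3) (e : R -> 'cV[R]_3) (t : R)
  : 'cV[R]_3 := derive1 e t + Phi *m e t.

Definition xiv {R : realType} (e : R -> 'cV[R]_3) (t : R) : 'cV[R]_(3 + 3) :=
  col_mx (e t) (derive1 e t).

(* Main.v *)
Require Import Defs.
From HB Require Import structures.
From mathcomp Require Import all_boot all_order all_algebra.
From mathcomp Require Import all_classical all_reals all_analysis.
Import Order.TTheory GRing.Theory Num.Theory.
Import numFieldNormedType.Exports.
Local Open Scope ring_scope.
From mathcomp Require Import ring lra.

Set Implicit Arguments. Unset Strict Implicit.
Section H.
Variable R : realType.
Implicit Types (t : R).
Lemma isdM (f g : R -> R) t a b : is_derive t 1 f a -> is_derive t 1 g b ->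
  is_derive t 1 (fun s => f s * g s) (a * g t + f t * b).
Proof.
move=> Hf Hg; have := is_deriveM Hf Hg.
have -> : (f * g) = (fun s => f s * g s) by [].
move=> H; apply: is_derive_eq H _.
idtac.
by rewrite addrC; congr (_ + _); rewrite mulrC.
Qed.

Lemma isdD (f g : R -> R) t a b : is_derive t 1 f a -> is_derive t 1 g b ->
  is_derive t 1 (fun s => f s + g s) (a + b).
Proof.
move=> Hf Hg; have := is_deriveD Hf Hg.
by have -> : f + g = (fun s => f s + g s) by [].
Qed.

Lemma isdsum n (h : 'I_n -> R -> R) t (d : 'I_n -> R) :
  (forall i, is_derive t 1 (h i) (d i)) ->
  is_derive t 1 (fun s => \sum_(i < n) h i s) (\sum_(i < n) d i).
Proof.
move=> H; have -> : (fun s => \sum_(i < n) h i s) = \sum_(i < n) h i.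
  by apply: funext => s; rewrite fct_sumE.
exact: is_derive_sum.
Qed.

Lemma isdcst (c : R) t : is_derive t 1 (fun _ : R => c) 0.
Proof. exact: is_derive_cst. Qed.

Lemma isdZ (f : R -> R) (k : R) t a : is_derive t 1 f a ->
  is_derive t 1 (fun s => k * f s) (k * a).
Proof.
move=> Hf; have := is_deriveZ k Hf.
have -> : k \*: f = (fun s => k * f s) by [].
done.
Qed.

Lemma isdX (f : R -> R) t a : is_derive t 1 f a ->
  is_derive t 1 (fun s => f s ^+ 2) (2%:R * f t * a).
Proof.
move=> Hf; have := isdM Hf Hf.
have -> : (fun s => f s * f s) = (fun s => f s ^+ 2) by apply: funext => s; rewrite expr2.
move=> H; apply: is_derive_eq H _.
by rewrite (mulrC a) -mulrDl -mulr2n mulr_natl.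
Qed.

Lemma coord_derive m n (f : R -> 'M[R]_(m,n)) t i j :
  derivable f t 1 -> is_derive t 1 (fun s => f s i j) (derive1 f t i j).
Proof.
move=> df.
have @g : {linear 'M[R]_(m, n) -> R}.
  by exists (fun N : 'M[R]_(_, _) => N i j); do 2![eexists]; do ?[constructor];
     rewrite ?mxE// => ? *; rewrite ?mxE//; move=> ?; rewrite !mxE.
have gE : (fun s => f s i j) = g \o f by [].
have Df : differentiable f t by apply/derivable1_diffP.
have Dg : differentiable g (f t) by exact/linear_differentiable/coord_continuous.
have Dgf : differentiable (g \o f) t by exact: differentiable_comp.
rewrite gE; apply: DeriveDef; first by apply/derivable1_diffP.
rewrite -derive1E derive1E' // diff_comp // diff_lin /=; last exact: coord_continuous.
by rewrite -derive1E' .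
Qed.

Lemma qfE n (x y : 'cV[R]_n) (M : 'M[R]_n) :
  (x^T *m M *m y) 0 0 = \sum_(j < n) \sum_(i < n) x i 0 * M i j * y j 0.
Proof.
rewrite !mxE; apply: eq_bigr => j _; rewrite mxE mulr_suml.
by apply: eq_bigr => i _; rewrite mxE.
Qed.

Lemma qf_derive n (x y : R -> 'cV[R]_n) (M : R -> 'M[R]_n) t :
  derivable x t 1 -> derivable M t 1 -> derivable y t 1 ->
  is_derive t 1 (fun s => ((x s)^T *m M s *m y s) 0 0)
   (((derive1 x t)^T *m M t *m y t) 0 0 + ((x t)^T *m derive1 M t *m y t) 0 0
    + ((x t)^T *m M t *m derive1 y t) 0 0).
Proof.
move=> dx dM dy.
have -> : (fun s => ((x s)^T *m M s *m y s) 0 0) =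
  (fun s => \sum_(j < n) \sum_(i < n) x s i 0 * M s i j * y s j 0).
  by apply: funext => s; rewrite qfE.
apply: is_derive_eq.
  apply: isdsum => j; apply: isdsum => i.
  apply: isdM; first apply: isdM.
  - exact: coord_derive.
  - exact: coord_derive.
  - exact: coord_derive.
rewrite !qfE -!big_split /=; apply: eq_bigr => j _.
rewrite -!big_split /=; apply: eq_bigr => i _.
by rewrite mulrDl.
Qed.
Lemma pd3 (a b c d e f : R) :
  (forall x y z, (x != 0) || (y != 0) || (z != 0) ->
     0 < a*x^+2 + d*y^+2 + f*z^+2 + 2%:R*b*x*y + 2%:R*c*x*z + 2%:R*e*y*z) ->
  exists k, 0 < k /\ forall x y z,
     k * (x^+2 + y^+2 + z^+2) <=
       a*x^+2 + d*y^+2 + f*z^+2 + 2%:R*b*x*y + 2%:R*c*x*z + 2%:R*e*y*z.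
Proof.
move=> H.
set q := fun x y z => a*x^+2 + d*y^+2 + f*z^+2 + 2%:R*b*x*y + 2%:R*c*x*z + 2%:R*e*y*z.
have {}H : forall x y z, (x != 0) || (y != 0) || (z != 0) -> 0 < q x y z := H.
have ha : 0 < a.
  have := H 1 0 0; rewrite oner_neq0 /= => /(_ isT).
  by have -> : q 1 0 0 = a by rewrite /q; ring.
set al := a * d - b ^+ 2.
set be := a * e - b * c.
set de := a * f - c ^+ 2.
set Q2 := fun y z => al * y^+2 + 2%:R * be * y * z + de * z^+2.
have aqE : forall x y z, a * q x y z = (a*x + b*y + c*z)^+2 + Q2 y z.
  by move=> x y z; rewrite /q /Q2 /al /be /de; ring.
have hQ2 : forall y z, (y != 0) || (z != 0) -> 0 < Q2 y z.
  move=> y z yz.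
  have := H (- (b*y + c*z)) (a*y) (a*z).
  have -> : (- (b*y + c*z) != 0) || (a*y != 0) || (a*z != 0).
    case/orP: yz => h; apply/orP; [left; apply/orP; right | right];
      by rewrite mulf_neq0 // gt_eqF.
  move=> /(_ isT).
  have -> : q (- (b * y + c * z)) (a * y) (a * z) = a * Q2 y z.
    by rewrite /q /Q2 /al /be /de; ring.
  by rewrite pmulr_rgt0.
have hal : 0 < al.
  have := hQ2 1 0; rewrite oner_neq0 /= => /(_ isT).
  by have -> : Q2 1 0 = al by rewrite /Q2; ring.
set D := al * de - be ^+ 2.
have hD : 0 < D.
  have := hQ2 (- be) al; rewrite (gt_eqF hal) orbT => /(_ isT).
  have -> : Q2 (- be) al = al * D by rewrite /Q2 /D; ring.
  by rewrite pmulr_rgt0.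
have alQ2 : forall y z, al * Q2 y z = (al * y + be * z)^+2 + D * z^+2.
  by move=> y z; rewrite /Q2 /D; ring.
set mm := Num.min al (Num.min 1 D).
have hmm : 0 < mm by rewrite /mm !lt_min hal ltr01 hD.
have mm1 : mm <= al by rewrite /mm ge_min lexx.
have mm2 : mm <= 1 by rewrite /mm !ge_min lexx !orbT.
have mm3 : mm <= D by rewrite /mm !ge_min lexx !orbT.
set K := 3%:R * al^+2 + 6%:R * b^+2 * (1 + be^+2) + 3%:R * c^+2 * al^+2
         + a^+2 * (2%:R + 2%:R * be^+2) + a^+2 * al^+2.
have hK : 0 < K.
  rewrite /K.
  have h1 := sqr_ge0 b; have h2 := sqr_ge0 be; have h3 := sqr_ge0 c.
  have h4 : 0 < a^+2 by rewrite exprn_gt0. have h5 : 0 < al^+2 by rewrite exprn_gt0.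
  nra.
exists (mm * a * al / K); split; first by rewrite !mulr_gt0 // invr_gt0.
move=> x y z.
set u := a*x + b*y + c*z.
set w := al*y + be*z.
have Hlow : mm * (u^+2 + w^+2 + z^+2) <= a * al * q x y z.
  have E1 := aqE x y z; have E2 := alQ2 y z; rewrite -/u in E1; rewrite -/w in E2.
  have -> : a * al * q x y z = al * u^+2 + w^+2 + D * z^+2.
    by rewrite (mulrC a) -mulrA E1 mulrDr E2; ring.
  have : 0 <= (al - mm) * u^+2 by rewrite mulr_ge0 ?sqr_ge0 // subr_ge0.
  have : 0 <= (1 - mm) * w^+2 by rewrite mulr_ge0 ?sqr_ge0 // subr_ge0.
  have : 0 <= (D - mm) * z^+2 by rewrite mulr_ge0 ?sqr_ge0 // subr_ge0.
  lra.
have Hy : al^+2 * y^+2 <= 2%:R * w^+2 + 2%:R * be^+2 * z^+2.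
  have -> : al^+2 * y^+2 = (w - be * z)^+2 by rewrite /w; ring.
  have := sqr_ge0 (w + be * z); nra.
have Hx : a^+2 * al^+2 * x^+2 <= 3%:R * al^+2 * u^+2 + 3%:R * b^+2 * (al^+2 * y^+2)
                                 + 3%:R * c^+2 * al^+2 * z^+2.
  have -> : a^+2 * al^+2 * x^+2 = (al * u - b * (al * y) - c * al * z)^+2 by rewrite /u; ring.
  have := sqr_ge0 (al * u + b * (al * y)); have := sqr_ge0 (al * u + c * al * z);
  have := sqr_ge0 (b * (al * y) - c * al * z); nra.
have hy0 : al^+2 * y^+2 <= 2%:R * w^+2 + 2%:R * be^+2 * z^+2 := Hy.
have T1 : 3%:R * b^+2 * (al^+2 * y^+2) <= 3%:R * b^+2 * (2%:R * w^+2 + 2%:R * be^+2 * z^+2).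
  by rewrite ler_wpM2l // mulr_ge0 // sqr_ge0.
have T2 : a^+2 * (al^+2 * y^+2) <= a^+2 * (2%:R * w^+2 + 2%:R * be^+2 * z^+2).
  by rewrite ler_wpM2l // sqr_ge0.
have nb := sqr_ge0 b; have nbe := sqr_ge0 be; have nc := sqr_ge0 c.
have na := sqr_ge0 a; have nal := sqr_ge0 al.
have p1 : 0 <= b^+2 * be^+2 by rewrite mulr_ge0.
have p2 : 0 <= c^+2 * al^+2 by rewrite mulr_ge0.
have p3 : 0 <= a^+2 * be^+2 by rewrite mulr_ge0.
have p4 : 0 <= a^+2 * al^+2 by rewrite mulr_ge0.
have k1 : 3%:R * al^+2 <= K by rewrite /K; lra.
have k2 : 6%:R * b^+2 + 2%:R * a^+2 <= K by rewrite /K; lra.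
have k3 : 6%:R * (b^+2 * be^+2) + 3%:R * (c^+2 * al^+2) + 2%:R * (a^+2 * be^+2) + a^+2 * al^+2 <= K.
  by rewrite /K; lra.
have nu := sqr_ge0 u; have nw := sqr_ge0 w; have nz := sqr_ge0 z.
have m1 := ler_wpM2r nu k1; have m2 := ler_wpM2r nw k2; have m3 := ler_wpM2r nz k3.
have Hup : a^+2 * al^+2 * (x^+2 + y^+2 + z^+2) <= K * (u^+2 + w^+2 + z^+2).
  have -> : a^+2 * al^+2 * (x^+2 + y^+2 + z^+2) =
    a^+2 * al^+2 * x^+2 + a^+2 * (al^+2 * y^+2) + a^+2 * al^+2 * z^+2 by ring.
  have e1 : 3%:R * b^+2 * (2%:R * w^+2 + 2%:R * be^+2 * z^+2) =
     6%:R * b^+2 * w^+2 + 6%:R * (b^+2 * be^+2) * z^+2 by ring.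
  have e2 : a^+2 * (2%:R * w^+2 + 2%:R * be^+2 * z^+2) =
     2%:R * a^+2 * w^+2 + 2%:R * (a^+2 * be^+2) * z^+2 by ring.
  have e3 : 3%:R * c^+2 * al^+2 * z^+2 = 3%:R * (c^+2 * al^+2) * z^+2 by ring.
  have e4 : K * (u^+2 + w^+2 + z^+2) = K * u^+2 + K * w^+2 + K * z^+2 by ring.
  have e5 : (6%:R * b^+2 + 2%:R * a^+2) * w^+2 = 6%:R * b^+2 * w^+2 + 2%:R * a^+2 * w^+2 by ring.
  have e6 : (6%:R * (b^+2 * be^+2) + 3%:R * (c^+2 * al^+2) + 2%:R * (a^+2 * be^+2) + a^+2 * al^+2) * z^+2
    = 6%:R * (b^+2 * be^+2) * z^+2 + 3%:R * (c^+2 * al^+2) * z^+2 + 2%:R * (a^+2 * be^+2) * z^+2 + a^+2 * al^+2 * z^+2 by ring.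
  rewrite e4; rewrite e1 in T1; rewrite e2 in T2; rewrite e3 in Hx; rewrite e5 in m2; rewrite e6 in m3.
  have e7 : 3%:R * al^+2 * u^+2 = 3%:R * al^+2 * u^+2 by [].
  lra.
have hq : 0 <= a * al by rewrite mulr_ge0 // ltW.
have haa : 0 < a * al by rewrite mulr_gt0.
change (mm * a * al / K * (x ^+ 2 + y ^+ 2 + z ^+ 2) <= q x y z).
set X := x ^+ 2 + y ^+ 2 + z ^+ 2.
set U := u ^+ 2 + w ^+ 2 + z ^+ 2.
have S1 : mm * (a^+2 * al^+2 * X) <= mm * (K * U) by rewrite ler_wpM2l // ltW.
have S2 : K * (mm * U) <= K * (a * al * q x y z) by rewrite ler_wpM2l // ltW.
have S3 : (a * al) * (mm * a * al * X) <= (a * al) * (q x y z * K).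
  have -> : (a * al) * (mm * a * al * X) = mm * (a^+2 * al^+2 * X) by ring.
  have -> : (a * al) * (q x y z * K) = K * (a * al * q x y z) by ring.
  have E : mm * (K * U) = K * (mm * U) by ring.
  rewrite E in S1; exact: le_trans S1 S2.
rewrite ler_pM2l // in S3.
by rewrite mulrAC ler_pdivrMr.
Qed.

Definition i0 : 'I_3 := @Ordinal 3 0 isT.
Definition i1 : 'I_3 := @Ordinal 3 1 isT.
Definition i2 : 'I_3 := @Ordinal 3 2 isT.

Lemma sum3 (F : 'I_3 -> R) : \sum_(i < 3) F i = F i0 + F i1 + F i2.
Proof.
rewrite !big_ord_recl big_ord0 addr0 addrA.
by congr (F _ + F _ + F _); apply: val_inj.
Qed.

Lemma qf3 (x y : 'cV[R]_3) (M : 'M[R]_3) :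
  (x^T *m M *m y) 0 0 =
   x i0 0 * M i0 i0 * y i0 0 + x i1 0 * M i1 i0 * y i0 0 + x i2 0 * M i2 i0 * y i0 0
 + (x i0 0 * M i0 i1 * y i1 0 + x i1 0 * M i1 i1 * y i1 0 + x i2 0 * M i2 i1 * y i1 0)
 + (x i0 0 * M i0 i2 * y i2 0 + x i1 0 * M i1 i2 * y i2 0 + x i2 0 * M i2 i2 * y i2 0).
Proof. by rewrite qfE !sum3. Qed.

Lemma dot3 (x : 'cV[R]_3) : (x^T *m x) 0 0 = x i0 0 ^+ 2 + x i1 0 ^+ 2 + x i2 0 ^+ 2.
Proof.
rewrite mxE sum3 !mxE; ring.
Qed.

Lemma posdef_lb (A : 'M[R]_3) : posdef A ->
  exists k, 0 < k /\ forall x : 'cV[R]_3, k * (x^T *m x) 0 0 <= (x^T *m A *m x) 0 0.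
Proof.
move=> [AT Apos].
have sy : forall i j, A i j = A j i.
  by move=> i j; rewrite -{1}AT mxE.
have [|k [k0 Hk]] := @pd3 (A i0 i0) (A i0 i1) (A i0 i2) (A i1 i1) (A i1 i2) (A i2 i2).
  move=> x y z nz.
  pose v : 'cV[R]_3 := \col_(i < 3) [:: x; y; z]`_i.
  have v0 : v != 0.
    apply: contraTneq nz => v0.
    have := congr1 (fun M : 'cV[R]_3 => (M i0 0, M i1 0, M i2 0)) v0.
    by rewrite /= !mxE /= => -[-> -> ->]; rewrite eqxx.
  have := Apos v v0; rewrite qf3 !mxE /= (sy i1 i0) (sy i2 i0) (sy i2 i1).
  congr (0 < _); ring.
exists k; split => // x.
rewrite dot3 qf3 (sy i1 i0) (sy i2 i0) (sy i2 i1).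
apply: le_trans (Hk _ _ _) _.
rewrite le_eqVlt; apply/orP; left; apply/eqP; ring.
Qed.
Section C.
Local Open Scope classical_set_scope.
Lemma comparison (V : R -> R) (B : R) :
  (forall t, 0 <= t -> derivable V t 1) ->
  (forall t, 0 <= t -> B < V t -> derive1 V t <= 0) ->
  forall t, 0 <= t -> V t <= Num.max (V 0) B.
Proof.
move=> dV negV t t0; rewrite leNgt; apply/negP => Ht.
set M := Num.max (V 0) B in Ht *.
have VM0 : V 0 <= M by rewrite /M le_max lexx.
have BM : B <= M by rewrite /M le_max lexx orbT.
set S := [set s | 0 <= s <= t /\ V s <= M].
have S0 : S 0 by split => //; rewrite lexx t0.
have ubt : ubound S t by move=> s [/andP[_ ->]].
have hS : has_sup S by split; [exists 0 | exists t].
set s0 := sup S.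
have s0t : s0 <= t by apply: ge_sup => //; exists 0.
have s00 : 0 <= s0 by apply: sup_upper_bound.
have cV : forall s, 0 <= s -> {for s, continuous V}.
  by move=> s s_ge0; apply/differentiable_continuous/derivable1_diffP/dV.
have Vs0 : V s0 <= M.
  rewrite leNgt; apply/negP => Ms0.
  have ep : 0 < V s0 - M by rewrite subr_gt0.
  have := cvgr_dist_lt _ _ (cV _ s00) _ ep.
  move=> /(_ (nbhs_filter _)) /nbhs_ballP [e /= e0 He].
  have [x Sx xlt] := sup_adherent e0 hS.
  have xs0 : x <= s0 by apply: sup_upper_bound.
  have : ball s0 e x.
    rewrite /ball /= ger0_norm ?subr_ge0 //; by rewrite ltrBlDl -ltrBlDr.
  move=> /He /= h; case: Sx => _ VxM.
  have := ler_norm (V s0 - V x); lra.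
have s0lt : s0 < t.
  rewrite lt_neqAle s0t andbT; apply/negP => /eqP E.
  by move: Ht; rewrite -E; lra.
have Vgt : forall s, s0 < s -> s <= t -> M < V s.
  move=> s s0s st; rewrite ltNge; apply/negP => VsM.
  have : s <= s0 by apply: sup_upper_bound => //; split => //; rewrite st andbT; apply: le_trans (ltW s0s).
  by rewrite leNgt s0s.
have dI : forall s, s \in `[s0, t]%R -> derivable V s 1.
  by move=> s; rewrite in_itv /= => /andP[h _]; apply: dV; apply: le_trans h.
have hle : V t <= V s0.
  apply: (@ler0_derive1_le_cc _ V s0 t).
  - by move=> s; rewrite in_itv /= => /andP[h1 h2]; apply: dI; rewrite in_itv /= (ltW h1) (ltW h2).
  - move=> s; rewrite in_itv /= => /andP[h1 h2]; apply: negV.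
      by apply: le_trans (ltW h1).
    by apply: le_lt_trans BM (Vgt _ h1 (ltW h2)).
  - exact: derivable_within_continuous.
  - by rewrite in_itv /= lexx (ltW s0lt).
  - by rewrite in_itv /= lexx (ltW s0lt).
  - exact: ltW.
lra.
Qed.
End C.
End H.
Section H2.
Variable R : realType.
Implicit Types (t : R).

Lemma dotC n (x y : 'cV[R]_n) : (x^T *m y) 0 0 = (y^T *m x) 0 0.
Proof. by rewrite !mxE; apply: eq_bigr => i _; rewrite !mxE mulrC. Qed.

Lemma qfT n (x y : 'cV[R]_n) (M : 'M[R]_n) :
  (x^T *m M *m y) 0 0 = (y^T *m M^T *m x) 0 0.
Proof.
have -> : (x^T *m M *m y) 0 0 = ((x^T *m M *m y)^T) 0 0 by rewrite [RHS]mxE.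
by rewrite !trmx_mul trmxK mulmxA.
Qed.

Lemma dot_derive n (x y : R -> 'cV[R]_n) t :
  derivable x t 1 -> derivable y t 1 ->
  is_derive t 1 (fun s => ((x s)^T *m y s) 0 0)
   (((derive1 x t)^T *m y t) 0 0 + ((x t)^T *m derive1 y t) 0 0).
Proof.
move=> dx dy.
have dM : derivable (fun _ : R => (1%:M : 'M[R]_n)) t 1 by exact: derivable_cst.
have := qf_derive dx dM dy.
have -> : (fun s => ((x s)^T *m 1%:M *m y s) 0 0) = (fun s => ((x s)^T *m y s) 0 0).
  by apply: funext => s; rewrite mulmx1.
move=> H; apply: is_derive_eq H _.
have -> : derive1 (fun _ : R => (1%:M : 'M[R]_n)) t = 0.
  by rewrite derive1E derive_cst.
by rewrite !mulmx1 mulmx0 mul0mx [X in _ + X + _]mxE addr0.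
Qed.

Lemma enorm_ge0 n (x : 'cV[R]_n) : 0 <= enorm x.
Proof. exact: sqrtr_ge0. Qed.

Lemma dot_ge0 n (x : 'cV[R]_n) : 0 <= (x^T *m x) 0 0.
Proof. by rewrite mxE sumr_ge0 // => i _; rewrite mxE -expr2 sqr_ge0. Qed.

Lemma enorm2 n (x : 'cV[R]_n) : enorm x ^+ 2 = (x^T *m x) 0 0.
Proof.
rewrite /enorm sqr_sqrtr; last by apply: sumr_ge0 => i _; apply: sqr_ge0.
by rewrite mxE; apply: eq_bigr => i _; rewrite mxE expr2.
Qed.

Lemma sgnv_dot n (x : 'cV[R]_n) : (x^T *m sgnv x) 0 0 = enorm x.
Proof.
rewrite /sgnv -scalemxAr mxE -enorm2.
have [->|nz] := eqVneq (enorm x) 0; first by rewrite expr0n mulr0.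
by rewrite expr2 mulKf.
Qed.

Lemma CS3 (x y : 'cV[R]_3) : (x^T *m y) 0 0 <= enorm x * enorm y.
Proof.
have E : (x^T *m y) 0 0 = x i0 0 * y i0 0 + x i1 0 * y i1 0 + x i2 0 * y i2 0.
  by rewrite mxE sum3 !mxE.
apply: le_trans (ler_norm _) _.
rewrite -sqrtr_sqr /enorm -sqrtrM;
  last by apply: sumr_ge0 => i _; apply: sqr_ge0.
rewrite ler_sqrt; last by rewrite mulr_ge0 // sumr_ge0 // => i _; apply: sqr_ge0.
rewrite !sum3 E.
set a1 := x i0 0; set a2 := x i1 0; set a3 := x i2 0.
set b1 := y i0 0; set b2 := y i1 0; set b3 := y i2 0.
have := sqr_ge0 (a1 * b2 - a2 * b1); have := sqr_ge0 (a1 * b3 - a3 * b1);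
have := sqr_ge0 (a2 * b3 - a3 * b2); nra.
Qed.

Lemma sgnv_dot' n (x : 'cV[R]_n) : (enorm x)^-1 * (x^T *m x) 0 0 = enorm x.
Proof.
rewrite -enorm2.
have [->|nz] := eqVneq (enorm x) 0; first by rewrite expr0n mulr0.
by rewrite expr2 mulKf.
Qed.

Definition j0 : 'I_2 := @Ordinal 2 0 isT.
Definition j1 : 'I_2 := @Ordinal 2 1 isT.
Lemma sum2 (F : 'I_2 -> R) : \sum_(i < 2) F i = F j0 + F j1.
Proof.
rewrite !big_ord_recl big_ord0 addr0.
by congr (F _ + F _); apply: val_inj.
Qed.


Lemma dotD n (x a b : 'cV[R]_n) : (x^T *m (a + b)) 0 0 = (x^T *m a) 0 0 + (x^T *m b) 0 0.
Proof. by rewrite mulmxDr mxE. Qed.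
Lemma dotN n (x a : 'cV[R]_n) : (x^T *m (- a)) 0 0 = - (x^T *m a) 0 0.
Proof. by rewrite mulmxN mxE. Qed.
Lemma dotZ n (x a : 'cV[R]_n) k : (x^T *m (k *: a)) 0 0 = k * (x^T *m a) 0 0.
Proof. by rewrite -scalemxAr mxE. Qed.
Lemma dotM n (x y : 'cV[R]_n) (M : 'M[R]_n) : (x^T *m (M *m y)) 0 0 = (x^T *m M *m y) 0 0.
Proof. by rewrite mulmxA. Qed.
Lemma qfBZ n (x y : 'cV[R]_n) (A B : 'M[R]_n) k :
  (x^T *m (A - k *: B) *m y) 0 0 = (x^T *m A *m y) 0 0 - k * (x^T *m B *m y) 0 0.
Proof. by rewrite mulmxBr mulmxBl -scalemxAr -scalemxAl !mxE. Qed.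

Lemma adapt_bound (al cc K Ks : R) : 0 < al -> cc <= al ->
  al * (K - Ks) * K >= cc / 2%:R * (K - Ks) ^+ 2 - al / 2%:R * Ks ^+ 2.
Proof.
move=> a0 ca.
have h1 : al * (K - Ks) * K = al / 2%:R * (K - Ks)^+2 + al / 2%:R * K^+2 - al / 2%:R * Ks^+2.
  by field.
rewrite h1.
have h2 : cc / 2%:R * (K - Ks)^+2 <= al / 2%:R * (K - Ks)^+2.
  by rewrite ler_wpM2r ?sqr_ge0 // ler_pM2r // invr_gt0 ltr0n.
have h3 : 0 <= al / 2%:R * K^+2 by rewrite mulr_ge0 ?sqr_ge0 // divr_ge0 // ltW.
lra.
Qed.

Lemma expj0 (x : R) : x ^+ j0 = 1. Proof. exact: expr0. Qed.
Lemma expj1 (x : R) : x ^+ j1 = x. Proof. exact: expr1. Qed.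
Lemma expi0 (x : R) : x ^+ i0 = 1. Proof. exact: expr0. Qed.
Lemma expi1 (x : R) : x ^+ i1 = x. Proof. exact: expr1. Qed.
Lemma expi2 (x : R) : x ^+ i2 = x ^+ 2. Proof. by []. Qed.
Lemma ordj0 : nat_of_ord j0 = 0%N. Proof. by []. Qed.
Lemma ordj1 : nat_of_ord j1 = 1%N. Proof. by []. Qed.
Lemma ordi0 : nat_of_ord i0 = 0%N. Proof. by []. Qed.
Lemma ordi1 : nat_of_ord i1 = 1%N. Proof. by []. Qed.
Lemma ordi2 : nat_of_ord i2 = 2%N. Proof. by []. Qed.
Lemma j0E : (0 : 'I_2) = j0. Proof. exact: val_inj. Qed.
Lemma j1E : (1 : 'I_2) = j1. Proof. exact: val_inj. Qed.
Lemma i0E : (0 : 'I_3) = i0. Proof. exact: val_inj. Qed.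
Lemma i1E : (1 : 'I_3) = i1. Proof. exact: val_inj. Qed.
Lemma i2E : (2%:R : 'I_3) = i2. Proof. exact: val_inj. Qed.
End H2.
Lemma final_ineq (R : realType) (m c lp lq X P QJX Cqq QJ Q Lpp Lqq np nq xp xq G Fp Fq mh alm
  Kp0 Kp1 Ks0 Ks1 ap0 ap1 Kq0 Kq1 Kq2 Kqs0 Kqs1 Kqs2 aq0 aq1 aq2 : R) :
  lp * P <= Lpp -> lq * Q <= Lqq -> c * (m * P) <= 2%:R * lp * P ->
  c * QJ <= 2%:R * lq * Q ->
  Fp <= np * Ks0 + np * (Ks1 * xp) ->
  Fq <= nq * Kqs0 + nq * (Kqs1 * xq) + nq * (Kqs2 * xq ^+ 2) ->
  c / 2%:R * (Kp0 - Ks0) ^+ 2 - ap0 / 2%:R * Ks0 ^+ 2 <= ap0 * (Kp0 - Ks0) * Kp0 ->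
  c / 2%:R * (Kp1 - Ks1) ^+ 2 - ap1 / 2%:R * Ks1 ^+ 2 <= ap1 * (Kp1 - Ks1) * Kp1 ->
  c / 2%:R * (mh - m) ^+ 2 - alm / 2%:R * m ^+ 2 <= alm * (mh - m) * mh ->
  c / 2%:R * (Kq0 - Kqs0) ^+ 2 - aq0 / 2%:R * Kqs0 ^+ 2 <= aq0 * (Kq0 - Kqs0) * Kq0 ->
  c / 2%:R * (Kq1 - Kqs1) ^+ 2 - aq1 / 2%:R * Kqs1 ^+ 2 <= aq1 * (Kq1 - Kqs1) * Kq1 ->
  c / 2%:R * (Kq2 - Kqs2) ^+ 2 - aq2 / 2%:R * Kqs2 ^+ 2 <= aq2 * (Kq2 - Kqs2) * Kq2 ->
  m * X = - Lpp - (Kp0 * 1 + Kp1 * xp) * np + mh * G + Fp - m * G ->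
  QJX = - Lqq - (Kq0 * 1 + Kq1 * xq + Kq2 * xq ^+ 2) * nq - Cqq + Fq ->
  2%:R^-1 * (m * (X + X)) +
  2%:R^-1 * (2%:R * (Kp0 - Ks0) * (np * xp ^+ 0 - ap0 * Kp0 + 0) +
             2%:R * (Kp1 - Ks1) * (np * xp ^+ 1 - ap1 * Kp1 + 0)) +
  2%:R^-1 * (2%:R * (mh - m) * (- G - alm * mh + 0)) +
  2%:R^-1 * (QJX + 2%:R * Cqq + QJX) +
  2%:R^-1 * (2%:R * (Kq0 - Kqs0) * (nq * xq ^+ 0 - aq0 * Kq0 + 0) +
             2%:R * (Kq1 - Kqs1) * (nq * xq ^+ 1 - aq1 * Kq1 + 0) +
             2%:R * (Kq2 - Kqs2) * (nq * xq ^+ 2 - aq2 * Kq2 + 0)) <=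
  - c * (2%:R^-1 * (m * P) + 2%:R^-1 * ((Kp0 - Ks0) ^+ 2 + (Kp1 - Ks1) ^+ 2) +
         2%:R^-1 * (mh - m) ^+ 2 + 2%:R^-1 * QJ +
         2%:R^-1 * ((Kq0 - Kqs0) ^+ 2 + (Kq1 - Kqs1) ^+ 2 + (Kq2 - Kqs2) ^+ 2)) +
  2%:R^-1 * (ap0 * Ks0 ^+ 2 + ap1 * Ks1 ^+ 2 + alm * m ^+ 2 +
             aq0 * Kqs0 ^+ 2 + aq1 * Kqs1 ^+ 2 + aq2 * Kqs2 ^+ 2).
Proof.
move=> H1 H2 H3 H4 H5 H6 A1 A2 A3 A4 A5 A6 E2 E4.
rewrite E4.
have -> : 2%:R^-1 * (m * (X + X)) = m * X :> R by field.
rewrite E2.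
lra.
Qed.


Unset Implicit Arguments. Set Strict Implicit.

Theorem mainTheorem1 (R : realType)
  (* unknown mass, upper inertia bound and uncertainty constants *)
  (m jbar : R) (Kps : 'I_2 -> R) (Kqs : 'I_3 -> R)
  (* design parameters *)
  (Lp Lq : 'M[R]_3) (alp : 'I_2 -> R) (alm : R) (alq : 'I_3 -> R) :
  0 < m -> 0 < jbar ->
  (forall i, 0 <= Kps i) -> (forall i, 0 <= Kqs i) ->
  posdef Lp -> posdef Lq ->
  (forall i, 0 < alp i) -> 0 < alm -> (forall i, 0 < alq i) ->
  exists B : R, 0 <= B /\
  forall (g jlow : R) (Phip Phiq : 'M[R]_3)
    (J Cq : R -> 'M[R]_3)
    (ep eqe phip phiq : R -> 'cV[R]_3)
    (mh : R -> R) (Kp : 'I_2 -> R -> R) (Kq : 'I_3 -> R -> R),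
    0 < g -> 0 < jlow -> jlow <= jbar ->
    posdef Phip -> posdef Phiq ->
    (* inertia matrix: symmetric, C^1, bounded *)
    (forall t, 0 <= t -> (J t)^T = J t) ->
    (forall t, 0 <= t -> derivable J t 1) ->
    (forall t, 0 <= t -> {for t, continuous (derive1 J)}) ->
    (forall t, 0 <= t -> forall r : 'cV[R]_3,
        jlow * (r^T *m r) 0 0 <= (r^T *m J t *m r) 0 0 /\
        (r^T *m J t *m r) 0 0 <= jbar * (r^T *m r) 0 0) ->
    (* skew-symmetry property *)
    (forall t, 0 <= t -> forall r : 'cV[R]_3,
        r^T *m (derive1 J t - 2%:R *: Cq t) *m r = 0) ->
    (* bounds on lumped uncertainties *)
    (forall t, 0 <= t ->
       enorm (phip t) <= Kps 0 + Kps 1 * enorm (xiv ep t)) ->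
    (forall t, 0 <= t ->
       enorm (phiq t) <= Kqs 0 + Kqs 1 * enorm (xiv eqe t)
                          + Kqs 2%:R * enorm (xiv eqe t) ^+ 2) ->
    (* regularity of the trajectories *)
    (forall t, 0 <= t -> derivable ep t 1) ->
    (forall t, 0 <= t -> derivable eqe t 1) ->
    (forall t, 0 <= t -> derivable (slide Phip ep) t 1) ->
    (forall t, 0 <= t -> derivable (slide Phiq eqe) t 1) ->
    (forall t, 0 <= t -> derivable mh t 1) ->
    (forall i t, 0 <= t -> derivable (Kp i) t 1) ->
    (forall i t, 0 <= t -> derivable (Kq i) t 1) ->
    (* closed-loop sliding dynamics with the control laws *)
    (forall t, 0 <= t ->
       m *: derive1 (slide Phip ep) t =
         (- (Lp *m slide Phip ep t)
          - (\sum_(i < 2) Kp i t * enorm (xiv ep t) ^+ i) *: sgnv (slide Phip ep t)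
          + mh t *: gvec g)
         + phip t - m *: gvec g) ->
    (forall t, 0 <= t ->
       J t *m derive1 (slide Phiq eqe) t =
         (- (Lq *m slide Phiq eqe t)
          - (\sum_(i < 3) Kq i t * enorm (xiv eqe t) ^+ i) *: sgnv (slide Phiq eqe t))
         - Cq t *m slide Phiq eqe t + phiq t) ->
    (* adaptive laws *)
    (forall i t, 0 <= t ->
       derive1 (Kp i) t = enorm (slide Phip ep t) * enorm (xiv ep t) ^+ i
                      - alp i * Kp i t) ->
    (forall t, 0 <= t ->
       derive1 mh t = - ((slide Phip ep t)^T *m gvec g) 0 0 - alm * mh t) ->
    (forall i t, 0 <= t ->
       derive1 (Kq i) t = enorm (slide Phiq eqe t) * enorm (xiv eqe t) ^+ i
                      - alq i * Kq i t) ->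
    (forall i, 0 < Kp i 0) -> 0 < mh 0 -> (forall i, 0 < Kq i 0) ->
    let V := fun t =>
      2%:R^-1 * (m * ((slide Phip ep t)^T *m slide Phip ep t) 0 0)
      + 2%:R^-1 * (\sum_(i < 2) (Kp i t - Kps i) ^+ 2)
      + 2%:R^-1 * (mh t - m) ^+ 2
      + 2%:R^-1 * ((slide Phiq eqe t)^T *m J t *m slide Phiq eqe t) 0 0
      + 2%:R^-1 * (\sum_(i < 3) (Kq i t - Kqs i) ^+ 2) in
    forall t, 0 <= t -> V t <= Num.max (V 0) B.
Proof.
move=> m0 jb0 Kps0 Kqs0 pLp pLq alp0 alm0 alq0.
have [lp [lp0 Hlp]] := posdef_lb pLp.
have [lq [lq0 Hlq]] := posdef_lb pLq.
set c := Num.min (Num.min (2%:R * lp / m) (2%:R * lq / jbar))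
   (Num.min (Num.min (alp j0) (alp j1))
     (Num.min alm (Num.min (alq i0) (Num.min (alq i1) (alq i2))))).
have c0 : 0 < c.
  by rewrite /c !lt_min !divr_gt0 ?mulr_gt0 ?alp0 ?alq0 ?alm0.
have c1 : c <= 2%:R * lp / m by rewrite /c !ge_min lexx.
have c2 : c <= 2%:R * lq / jbar by rewrite /c !ge_min lexx !orbT.
have c3 : c <= alp j0 by rewrite /c !ge_min lexx !orbT.
have c4 : c <= alp j1 by rewrite /c !ge_min lexx !orbT.
have c5 : c <= alm by rewrite /c !ge_min lexx !orbT.
have c6 : c <= alq i0 by rewrite /c !ge_min lexx !orbT.
have c7 : c <= alq i1 by rewrite /c !ge_min lexx !orbT.
have c8 : c <= alq i2 by rewrite /c !ge_min lexx !orbT.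
set d := 2%:R^-1 * (alp j0 * Kps j0 ^+ 2 + alp j1 * Kps j1 ^+ 2 + alm * m ^+ 2
          + alq i0 * Kqs i0 ^+ 2 + alq i1 * Kqs i1 ^+ 2 + alq i2 * Kqs i2 ^+ 2).
have d0 : 0 <= d.
  rewrite /d mulr_ge0 // ?invr_ge0 ?ler0n //.
  by rewrite !addr_ge0 // mulr_ge0 // ?sqr_ge0 // ltW.
exists (d / c); split; first by rewrite divr_ge0 // ltW.
move=> g jlow Phip Phiq J Cq ep eqe phip phiq mh Kp Kq g0 jl0 jlj pPhp pPhq
  Jsym dJ cJ Jb skew bp bq dep deq dsp dsq dmh dKp dKq dynp dynq adp admh adq
  Kp0 mh0 Kq0 V.
set sp := slide Phip ep in dsp dynp adp admh V *.
set sq := slide Phiq eqe in dsq dynq adq V *.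
have HV : forall t : R, 0 <= t -> exists D, is_derive t 1 V D /\ D <= - c * V t + d.
  move=> t t0.
  eexists; split.
    rewrite /V.
    apply: isdD; [apply: isdD; [apply: isdD; [apply: isdD|]|]|].
    - apply: isdZ; apply: isdZ; apply: dot_derive; exact: dsp.
    - apply: isdZ; apply: isdsum => i; apply: isdX.
      by apply: isdD; first exact: derivableP (dKp i t t0).
    - apply: isdZ; apply: isdX; 
      by apply: isdD; first exact: derivableP (dmh t t0).
    - apply: isdZ; apply: qf_derive; [exact: dsq | exact: dJ | exact: dsq].
    - apply: isdZ; apply: isdsum => i; apply: isdX; 
      by apply: isdD; first exact: derivableP (dKq i t t0).
  cbv beta. rewrite !sum2 !sum3. cbv beta. rewrite -!derive1E. rewrite !(adp _ _ t0) (admh _ t0) !(adq _ _ t0).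
  rewrite !ordj0 !ordj1 !ordi0 !ordi1 !ordi2.
  have E1 := dotC (derive1 sp t) (sp t).
  have E2 : m * ((sp t)^T *m derive1 sp t) 0 0 =
     - ((sp t)^T *m Lp *m sp t) 0 0
     - (Kp j0 t * 1 + Kp j1 t * enorm (xiv ep t)) * enorm (sp t)
     + mh t * ((sp t)^T *m gvec g) 0 0 + ((sp t)^T *m phip t) 0 0
     - m * ((sp t)^T *m gvec g) 0 0.
    rewrite -dotZ (dynp t t0) !dotD !dotN !dotZ sgnv_dot' dotM sum2 !ordj0 !ordj1.
    ring.
  have E3 : ((derive1 sq t)^T *m J t *m sq t) 0 0 = ((sq t)^T *m J t *m derive1 sq t) 0 0.
    by rewrite qfT (Jsym t t0).
  have E4 : ((sq t)^T *m J t *m derive1 sq t) 0 0 =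
     - ((sq t)^T *m Lq *m sq t) 0 0
     - (Kq i0 t * 1 + Kq i1 t * enorm (xiv eqe t) + Kq i2 t * enorm (xiv eqe t) ^+ 2)
        * enorm (sq t)
     - ((sq t)^T *m Cq t *m sq t) 0 0 + ((sq t)^T *m phiq t) 0 0.
    rewrite -dotM (dynq t t0) !dotD !dotN !dotZ sgnv_dot' !dotM sum3 !ordi0 !ordi1 !ordi2.
    ring.
  have E5 : ((sq t)^T *m derive1 J t *m sq t) 0 0 = 2%:R * ((sq t)^T *m Cq t *m sq t) 0 0.
    have := congr1 (fun M : 'M[R]_1 => M 0 0) (skew t t0 (sq t)).
    rewrite qfBZ [RHS]mxE => /eqP; rewrite subr_eq0 => /eqP.
    done.
  have P0 := dot_ge0 (sp t).
  have Q0 := dot_ge0 (sq t).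
  have F1 := Hlp (sp t).
  have F2 := Hlq (sq t).
  have F1' : c * (m * ((sp t)^T *m sp t) 0 0) <= 2%:R * lp * ((sp t)^T *m sp t) 0 0.
    rewrite mulrA ler_wpM2r //.
    by rewrite -ler_pdivlMr.
  have Jb' := (Jb t t0 (sq t)).2.
  have F2' : c * ((sq t)^T *m J t *m sq t) 0 0 <= 2%:R * lq * ((sq t)^T *m sq t) 0 0.
    apply: le_trans (_ : c * (jbar * ((sq t)^T *m sq t) 0 0) <= _).
      by rewrite ler_wpM2l // ltW.
    rewrite mulrA ler_wpM2r //.
    by rewrite -ler_pdivlMr.
  have np0 := enorm_ge0 (sp t).
  have nq0 := enorm_ge0 (sq t).
  have CSp : ((sp t)^T *m phip t) 0 0 <=
      enorm (sp t) * Kps j0 + enorm (sp t) * (Kps j1 * enorm (xiv ep t)).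
    apply: le_trans (CS3 _ _) _.
    have := bp t t0; rewrite j0E j1E => h.
    by apply: le_trans (ler_wpM2l np0 h) _; rewrite mulrDr.
  have CSq : ((sq t)^T *m phiq t) 0 0 <=
      enorm (sq t) * Kqs i0 + enorm (sq t) * (Kqs i1 * enorm (xiv eqe t))
      + enorm (sq t) * (Kqs i2 * enorm (xiv eqe t) ^+ 2).
    apply: le_trans (CS3 _ _) _.
    have := bq t t0; rewrite i2E i1E i0E => h.
    by apply: le_trans (ler_wpM2l nq0 h) _; rewrite !mulrDr.
  have A1 := adapt_bound (Kp j0 t) (Kps j0) (alp0 j0) c3.
  have A2 := adapt_bound (Kp j1 t) (Kps j1) (alp0 j1) c4.
  have A3 := adapt_bound (mh t) m alm0 c5.
  have A4 := adapt_bound (Kq i0 t) (Kqs i0) (alq0 i0) c6.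
  have A5 := adapt_bound (Kq i1 t) (Kqs i1) (alq0 i1) c7.
  have A6 := adapt_bound (Kq i2 t) (Kqs i2) (alq0 i2) c8.
  rewrite E1 E3 E5.
  rewrite /V; cbv beta; rewrite !sum2 !sum3 /d.
  exact: (final_ineq F1 F2 F1' F2' CSp CSq A1 A2 A3 A4 A5 A6 E2 E4).
move=> t t0.
apply: (@comparison _ V (d / c)) => // s s0.
  by have [D [[dD _] _]] := HV s s0.
move=> BV; have [D [[_ HD] HDle]] := HV s s0.
rewrite derive1E HD; apply: le_trans HDle _.
rewrite mulNr addrC subr_le0.
move: BV; rewrite ltr_pdivrMr // mulrC => /ltW.
done.
Qed.
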